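(* Let $X$ be a finite set and $r,k$ integers with $r\ge 3$, $k\ge r$, $k\ge 5$ and $|X|-k\ge\max(7,r)$. Let $\mathcal{F}$ be a clone on $X$ such that either $f_{r;1,2}\in\mathcal{F}$, or (weaker) for every one-to-one $\bar a\in X^r$ there is $f_{\bar a}\in\mathcal{F}$ with $f_{\bar a}(\bar a)=a_2$ and $f_{\bar a}(\bar b)=b_1$ for every $\bar b\in X^r$ that is not one-to-one. Let $\mathfrak{C}$ be a nonempty symmetric family of choice functions for $\binom{X}{k}$ which is closed under every $f\in\mathcal{F}$. Then $\mathfrak{C}$ is full, i.e. every choice function for $\binom{X}{k}$ belongs to $\mathfrak{C}$.
   Context: A clone on $X$: set of finitary operations on $X$ containing all projections and closed under composition. $\binom{X}{k}=\{Y\subseteq X:|Y|=k\}$; a choice function $c$ satisfies $c(Y)\in Y$. Symmetric: for every permutation $\pi$ of $X$ and $c\in\mathfrak{C}$, $(\pi*c)(Y)=\pi^{-1}(c(\pi(Y)))$ is in $\mathfrak{C}$. $\mathfrak{C}$ is closed under an $n$-place $f$ if for all $c_1,\dots,c_n\in\mathfrak{C}$, the function $Y\mapsto f(c_1(Y),\dots,c_n(Y))$ is in $\mathfrak{C}$. $f_{r;1,2}(\bar x)=x_1$ if $\bar x\in X^r$ has a repetition and $x_2$ otherwise. *)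

(* Defs.v *)
From mathcomp Require Import all_boot all_fingroup.
Set Implicit Arguments. Unset Strict Implicit. Unset Printing Implicit Defensive.

Definition op (X : finType) (n : nat) := {ffun n.-tuple X -> X}.

Definition is_clone (X : finType) (F : forall n, op X n -> Prop) : Prop :=
  (forall n (i : 'I_n), F n [ffun x : n.-tuple X => tnth x i]) /\
  (forall n m (f : op X n) (g : 'I_n -> op X m),
      F n f -> (forall i, F m (g i)) ->
      F m [ffun x : m.-tuple X => f [tuple g i x | i < n]]).

Notation ksub X k := {Y : {set X} | #|Y| == k}.

Notation kfun X k := {ffun ksub X k -> X}.
Definition is_choice (X : finType) (k : nat) (c : kfun X k) : Prop :=
  forall Y : ksub X k, c Y \in val Y.

Lemma card_perm_img (X : finType) (k : nat) (pi : {perm X}) (Y : ksub X k) :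
  #|pi @: val Y| == k.
Proof. rewrite card_imset; [exact: (valP Y) | exact: perm_inj]. Qed.

Definition kimg (X : finType) (k : nat) (pi : {perm X}) (Y : ksub X k)
  : ksub X k := exist _ (pi @: val Y) (card_perm_img pi Y).

Definition perm_act (X : finType) (k : nat) (pi : {perm X}) (c : kfun X k)
  : kfun X k := [ffun Y => (pi^-1)%g (c (kimg pi Y))].

Definition symmetric_fam (X : finType) (k : nat) (C : kfun X k -> Prop) :=
  forall (pi : {perm X}) c, C c -> C (perm_act pi c).

Definition closed_under (X : finType) (k n : nat) (C : kfun X k -> Prop)
  (f : op X n) : Prop :=
  forall cs : 'I_n -> kfun X k, (forall i, C (cs i)) ->
    C [ffun Y => f [tuple cs i Y | i < n]].

(* f is f_{r;1,2}: returns x_1 if x has a repetition and x_2 otherwise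
   (x_1, x_2 are the entries of index 0 and 1). *)
Definition is_f_r12 (X : finType) (r : nat) (f : op X r) : Prop :=
  forall (x : r.-tuple X) (i1 i2 : 'I_r), val i1 = 0 -> val i2 = 1 ->
    f x = if uniq x then tnth x i2 else tnth x i1.

(* Main.v *)
Require Import Defs.
From mathcomp Require Import all_boot all_fingroup.
From mathcomp Require Import zify.
From Stdlib Require Import Lia.
Set Implicit Arguments. Unset Strict Implicit. Unset Printing Implicit Defensive.

Lemma mem_tp_imset (X : finType) (x y z : X) (S : {set X}) :
  (z \in tperm x y @: S) = (tperm x y z \in S).
Proof.
by rewrite -{1}(tpermK x y z) mem_imset //; exact: perm_inj.
Qed.

Lemma tp_stab (X : finType) (x y : X) (S : {set X}) :
  (x \in S) = (y \in S) -> tperm x y @: S = S.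
Proof.
move=> Hxy; apply/setP => z; rewrite mem_tp_imset.
by case: tpermP => [->|->|//]; rewrite Hxy.
Qed.

Lemma kimg_stab (X : finType) (k : nat) (x y : X) (Y : ksub X k) :
  (x \in val Y) = (y \in val Y) -> kimg (tperm x y) Y = Y.
Proof. by move=> H; apply: val_inj; rewrite /= tp_stab. Qed.

Lemma pa_tp (X : finType) (k : nat) (x y : X) (Y : ksub X k) c :
  (x \in val Y) = (y \in val Y) ->
  perm_act (tperm x y) c Y = tperm x y (c Y).
Proof. by move=> H; rewrite /perm_act ffunE tpermV kimg_stab. Qed.

Lemma pa_tp_gen (X : finType) (k : nat) (x y : X) (Y : ksub X k) c :
  perm_act (tperm x y) c Y = tperm x y (c (kimg (tperm x y) Y)).
Proof. by rewrite /perm_act ffunE tpermV. Qed.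

Lemma T_lemma (X : finType) (k : nat) (C : kfun X k -> Prop) c0 :
  (forall c, C c -> is_choice c) -> symmetric_fam C -> C c0 ->
  forall (Y : ksub X k) w, w \in val Y -> exists d, C d /\ d Y = w.
Proof.
move=> HC HS H0 Y w Hw; exists (perm_act (tperm (c0 Y) w) c0); split; first exact: HS.
by rewrite pa_tp ?tpermL // Hw HC.
Qed.

Lemma pick3 (X : finType) (S : {set X}) a b :
  3 <= #|S| -> exists z, [/\ z \in S, z != a & z != b].
Proof.
move=> H.
have : 0 < #|S :\: [set a; b]|.
  rewrite cardsD; have := subset_leq_card (subsetIr S [set a; b]).
  have := cards2 a b; move: H; case: (a == b) => /=; lia.
case/card_gt0P => z; rewrite !inE negb_or => /andP[/andP[Ha Hb] Hz].
by exists z.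
Qed.

Definition weakF (X : finType) r (F : forall n, op X n -> Prop) :=
  forall a : r.-tuple X, uniq a ->
      exists f : op X r, F r f /\
        forall i1 i2 : 'I_r, val i1 = 0 -> val i2 = 1 ->
          f a = tnth a i2 /\
          (forall b : r.-tuple X, ~~ uniq b -> f b = tnth b i1).

Lemma weak_of (X : finType) r (F : forall n, op X n -> Prop) :
  ((exists f : op X r, F r f /\ is_f_r12 f) \/ weakF r F) -> weakF r F.
Proof.
case=> // [[f [Ff Hf]]] a ua; exists f; split => // i1 i2 h1 h2; split.
  by rewrite (Hf a i1 i2 h1 h2) ua.
by move=> b /negbTE ub; rewrite (Hf b i1 i2 h1 h2) ub.
Qed.

Definition Op3 (X : finType) k (C : kfun X k -> Prop) :=
  forall d1 d2 d3, C d1 -> C d2 -> C d3 -> forall Y0,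
   d1 Y0 != d2 Y0 -> d1 Y0 != d3 Y0 -> d2 Y0 != d3 Y0 ->
   exists e, C e /\ e Y0 = d2 Y0 /\
     forall Y, [|| d1 Y == d2 Y, d1 Y == d3 Y | d2 Y == d3 Y] -> e Y = d1 Y.

Lemma Op3_of (X : finType) r k (F : forall n, op X n -> Prop) (C : kfun X k -> Prop) c0 :
  3 <= r -> r <= k -> weakF r F ->
  (forall n (f : op X n), F n f -> closed_under C f) ->
  (forall c, C c -> is_choice c) -> symmetric_fam C -> C c0 -> Op3 C.
Proof.
move=> Hr Hrk W HCl HC HS H0 d1 d2 d3 C1 C2 C3 Y0 n12 n13 n23.
have I1 : d1 Y0 \in val Y0 by apply: HC.
have I2 : d2 Y0 \in val Y0 by apply: HC.
have I3 : d3 Y0 \in val Y0 by apply: HC.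
set s := [:: d1 Y0, d2 Y0, d3 Y0 & enum (val Y0 :\: [set d1 Y0; d2 Y0; d3 Y0])].
have us : uniq s.
  rewrite /s /= !inE !mem_enum !inE enum_uniq !negb_or !eqxx /= !andbT.
  by rewrite n12 n13 n23 !andbF.
have sY : forall z, z \in s -> z \in val Y0.
  by move=> z; rewrite !inE mem_enum !inE => /or4P[/eqP->|/eqP->|/eqP->|/andP[]].
have ks : k <= size s.
  rewrite -(eqP (valP Y0)); apply: leq_trans (card_size s).
  apply: subset_leq_card; apply/subsetP => z Hz.
  rewrite !inE mem_enum !inE Hz andbT.
  by case: (z == d1 Y0); case: (z == d2 Y0); case: (z == d3 Y0).
pose Fv (i : 'I_r) := nth (d1 Y0) s i.
have HFv : forall i, Fv i \in val Y0 by move=> i; apply/sY/mem_nth; exact: (leq_trans (ltn_ord i) (leq_trans Hrk ks)).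
pose Tf w := perm_act (tperm (c0 Y0) w) c0.
have HTf : forall w, w \in val Y0 -> Tf w Y0 = w.
  by move=> w Hw; rewrite /Tf pa_tp ?tpermL // Hw HC.
pose ds (i : 'I_r) := if val i == 0 then d1 else if val i == 1 then d2
   else if val i == 2 then d3 else Tf (Fv i).
have Hds : forall i, ds i Y0 = Fv i.
  move=> i; rewrite /ds; case: i => [[|[|[|n]]] Hi] //=.
  by rewrite HTf // (HFv (Ordinal Hi)).
have HdsC : forall i, C (ds i).
  move=> i; rewrite /ds; case: i => [[|[|[|n]]] Hi] //=.
  by apply: HS.
have ua : uniq [tuple ds i Y0 | i < r].
  apply/tuple_uniqP => i j; rewrite !tnth_mktuple !Hds /Fv => /eqP.
  by rewrite nth_uniq //; [move=> /eqP/val_inj | exact: (leq_trans (ltn_ord i) (leq_trans Hrk ks)) | exact: (leq_trans (ltn_ord j) (leq_trans Hrk ks))].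
have h0 : 0 < r by lia.
have h1 : 1 < r by lia.
have h2 : 2 < r by lia.
have [f [Ff Hf]] := W _ ua.
have [fa fb] := Hf (Ordinal h0) (Ordinal h1) erefl erefl.
exists [ffun Y => f [tuple ds i Y | i < r]]; split; first exact: HCl.
split; first by rewrite ffunE fa tnth_mktuple.
move=> Y HY; rewrite ffunE fb ?tnth_mktuple //.
apply/negP => /tuple_uniqP inj.
case/or3P: HY => /eqP E.
- by have := inj (Ordinal h0) (Ordinal h1); rewrite !tnth_mktuple /= E => /(_ erefl)/(congr1 val).
- by have := inj (Ordinal h0) (Ordinal h2); rewrite !tnth_mktuple /= E => /(_ erefl)/(congr1 val).
- by have := inj (Ordinal h1) (Ordinal h2); rewrite !tnth_mktuple /= E => /(_ erefl)/(congr1 val).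
Qed.

Definition Good (X : finType) k (C : kfun X k -> Prop) :=
  [/\ forall c, C c -> is_choice c, symmetric_fam C, Op3 C & exists c, C c].

Definition Rel (X : finType) k (C : kfun X k -> Prop) (Y0 Y1 : ksub X k) (u v : X) :=
  exists d, C d /\ d Y0 = u /\ d Y1 = v.

Definition FULL2 (X : finType) k (C : kfun X k -> Prop) (Y0 Y1 : ksub X k) :=
  forall u v, u \in val Y0 -> v \in val Y1 -> Rel C Y0 Y1 u v.

Lemma Tg (X : finType) k (C : kfun X k -> Prop) : Good C ->
  forall (Y : ksub X k) w, w \in val Y -> exists d, C d /\ d Y = w.
Proof. case=> HC HS _ [c0 H0]; exact: (T_lemma HC HS H0). Qed.

Lemma cardY (X : finType) k (Y : ksub X k) : #|val Y| = k.
Proof. exact: (eqP (valP Y)). Qed.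

Lemma L1 (X : finType) k (C : kfun X k -> Prop) : Good C -> 3 <= k ->
  forall (Y0 Y1 : ksub X k) u1 u2 v, u1 != u2 -> Rel C Y0 Y1 u1 v -> Rel C Y0 Y1 u2 v ->
  FULL2 C Y0 Y1.
Proof.
move=> G Hk Y0 Y1 u1 u2 v n12 [d1 [C1 [e10 e11]]] [d2 [C2 [e20 e21]]].
have [HC HS Hop _] := G.
have fib : forall u, u \in val Y0 -> Rel C Y0 Y1 u v.
  move=> u Hu.
  case: (eqVneq u u1) => [->|nu1]; first by exists d1.
  case: (eqVneq u u2) => [->|nu2]; first by exists d2.
  have [d [Cd Hd]] := Tg G Hu.
  have [e [Ce [E0 E1]]] := Hop d1 d d2 C1 Cd C2 Y0
     ltac:(by rewrite e10 Hd eq_sym) ltac:(by rewrite e10 e20)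
     ltac:(by rewrite Hd e20).
  exists e; split => //; split; first by rewrite E0.
  by rewrite E1 ?e11 ?e21 ?eqxx ?orbT.
move=> u w Hu Hw.
have [d [Cd Hd]] := Tg G Hw.
case: (eqVneq u (d Y0)) => [->|nup]; first by exists d.
have [p [Hp np1 np2]] := pick3 (d Y0) u (ltac:(by rewrite cardY) : 3 <= #|val Y0|).
have [du [Cu [eu0 eu1]]] := fib u Hu.
have [dp [Cp [ep0 ep1]]] := fib p Hp.
have [e [Ce [E0 E1]]] := Hop d du dp Cd Cu Cp Y0
   ltac:(by rewrite eu0 eq_sym) ltac:(by rewrite ep0 eq_sym)
   ltac:(by rewrite eu0 ep0 eq_sym).
exists e; split => //; split; first by rewrite E0.
by rewrite E1 ?Hd ?eu1 ?ep1 ?eqxx ?orbT.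
Qed.

Lemma FULL2_sym (X : finType) k (C : kfun X k -> Prop) (Y0 Y1 : ksub X k) :
  FULL2 C Y1 Y0 -> FULL2 C Y0 Y1.
Proof.
move=> H u v Hu Hv; have [d [Cd [E1 E2]]] := H v u Hv Hu; by exists d.
Qed.

Lemma two_partners (X : finType) k (C : kfun X k -> Prop) : Good C -> 3 <= k ->
  forall Y0 Y1 : ksub X k,
  (exists u1 u2 v, [/\ u1 != u2, Rel C Y0 Y1 u1 v & Rel C Y0 Y1 u2 v]) \/
  (exists u v1 v2, [/\ v1 != v2, Rel C Y0 Y1 u v1 & Rel C Y0 Y1 u v2]) ->
  FULL2 C Y0 Y1.
Proof.
move=> G Hk Y0 Y1 [[u1 [u2 [v [n H1 H2]]]]|[u [v1 [v2 [n H1 H2]]]]].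
  exact: L1 H1 H2.
apply: FULL2_sym; apply: (@L1 _ _ _ G Hk Y1 Y0 v1 v2 u n).
  by case: H1 => d [Cd [E1 E2]]; exists d.
by case: H2 => d [Cd [E1 E2]]; exists d.
Qed.

Lemma transfer (X : finType) k (C : kfun X k -> Prop) : Good C ->
  forall (x y : X) (Y0 Y1 : ksub X k),
  FULL2 C (kimg (tperm x y) Y0) (kimg (tperm x y) Y1) -> FULL2 C Y0 Y1.
Proof.
move=> [HC HS _ _] x y Y0 Y1 H u v Hu Hv.
have [e [Ce [E0 E1]]] := H (tperm x y u) (tperm x y v)
   ltac:(by rewrite /= mem_tp_imset tpermK) ltac:(by rewrite /= mem_tp_imset tpermK).
exists (perm_act (tperm x y) e); split; first exact: HS.
by rewrite !pa_tp_gen E0 E1 !tpermK.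
Qed.

Lemma tp_rel (X : finType) k (C : kfun X k -> Prop) : Good C ->
  forall (x y : X) (Y0 Y1 : ksub X k) u v, Rel C Y0 Y1 u v ->
  (x \in val Y0) = (y \in val Y0) -> (x \in val Y1) = (y \in val Y1) ->
  Rel C Y0 Y1 (tperm x y u) (tperm x y v).
Proof.
move=> [HC HS _ _] x y Y0 Y1 u v [d [Cd [E0 E1]]] H0 H1.
exists (perm_act (tperm x y) d); split; first exact: HS.
by rewrite !pa_tp // E0 E1.
Qed.

Lemma FULL2_main (X : finType) k (C : kfun X k -> Prop) : Good C -> 4 <= k ->
  forall Y0 Y1 : ksub X k, Y0 != Y1 -> FULL2 C Y0 Y1.
Proof.
move=> G Hk Y0 Y1 nY.
have [HC HS Hop _] := G.
have Hk3 : 3 <= k by lia.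
have cD : #|val Y0 :\: val Y1| = #|val Y1 :\: val Y0|.
  by rewrite !cardsD !cardY setIC.
have cI : #|val Y0 :\: val Y1| = k - #|val Y0 :&: val Y1| by rewrite cardsD cardY.
have pos : 0 < #|val Y0 :\: val Y1|.
  rewrite lt0n; apply/negP => /eqP/cards0_eq/eqP; rewrite setD_eq0 => sub.
  move/negP: nY; apply; apply/eqP/val_inj/eqP.
  by rewrite eqEcard sub !cardY leqnn.
case: (ltnP 1 #|val Y0 :\: val Y1|) => [gt1|le1].
  case/card_gt1P: gt1 => u [q [Hu Hq nuq]].
  move: Hu Hq; rewrite !inE => /andP[Hu1 Hu0] /andP[Hq1 Hq0].
  have [d [Cd Hd]] := Tg G Hu0.
  have HdY1 : d Y1 \in val Y1 by apply: HC.
  apply: (two_partners G Hk3); left; exists u, q, (d Y1); split => //.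
    by exists d.
  have := tp_rel G (x:=u) (y:=q) (Y0:=Y0) (Y1:=Y1) (ex_intro _ d (conj Cd (conj Hd erefl)))
            ltac:(by rewrite Hu0 Hq0) ltac:(by apply/idP/idP => H; [case/negP: Hu1 | case/negP: Hq1]).
  rewrite tpermL tpermD //.
    by apply: contraNneq Hu1 => ->.
  by apply: contraNneq Hq1 => ->.
have e1 : #|val Y0 :\: val Y1| == 1 by rewrite eqn_leq le1 pos.
have e1' : #|val Y1 :\: val Y0| == 1 by rewrite -cD.
case/cards1P: e1 => a Ea; case/cards1P: e1' => b Eb.
have : a \in val Y0 :\: val Y1 by rewrite Ea set11.
rewrite inE => /andP[aY1 aY0].
have : b \in val Y1 :\: val Y0 by rewrite Eb set11.
rewrite inE => /andP[bY0 bY1].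
have onlyA : forall z, z \in val Y0 -> z \notin val Y1 -> z = a.
  by move=> z H0 H1; apply/set1P; rewrite -Ea inE H0 H1.
have onlyB : forall z, z \in val Y1 -> z \notin val Y0 -> z = b.
  by move=> z H0 H1; apply/set1P; rewrite -Eb inE H0 H1.
have cI3 : 3 <= #|val Y0 :&: val Y1|.
  move: cI; rewrite Ea cards1; lia.
have [d [Cd Hd]] := Tg G aY0.
have HdY1 : d Y1 \in val Y1 by apply: HC.
have nab : a != b by apply: contraNneq bY0 => <-.
case: (eqVneq (d Y1) b) => [db|ndb]; last first.
  have v0 : d Y1 \in val Y0.
    by apply/negPn/negP => H; move/eqP: ndb; apply; apply: onlyB.
  have [s [Hs ns _]] := pick3 (d Y1) (d Y1) cI3.
  move: Hs; rewrite inE => /andP[sY0 sY1].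
  apply: (two_partners G Hk3); right; exists a, (d Y1), s; split.
  - by rewrite eq_sym.
  - by exists d.
  have := tp_rel G (x:=d Y1) (y:=s) (Y0:=Y0) (Y1:=Y1) (ex_intro _ d (conj Cd (conj Hd erefl)))
            ltac:(by rewrite v0 sY0) ltac:(by rewrite HdY1 sY1).
  rewrite tpermL tpermD //.
    by apply: contraNneq aY1 => <-.
  by apply: contraNneq aY1 => <-.
have [q [Hq _ _]] := pick3 a a cI3.
move: Hq; rewrite inE => /andP[qY0 qY1].
have nqa : q != a by apply: contraNneq aY1 => <-.
have nqb : q != b by apply: contraNneq bY0 => <-.
set Y' := kimg (tperm q a) Y1.
have aY' : a \in val Y' by rewrite /= mem_tp_imset tpermR.
have bY' : b \in val Y' by rewrite /= mem_tp_imset tpermD // eq_sym.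
have IY' : forall z, z \in val Y0 -> z \in val Y1 -> z != q -> z \in val Y'.
  move=> z H0 H1 nzq; rewrite /= mem_tp_imset tpermD // 1?eq_sym //.
  by apply: contraNneq aY1 => <-.
case: (eqVneq (d Y') a) => [da|nda].
  apply: (transfer G (x:=q) (y:=b)).
  have -> : kimg (tperm q b) Y1 = Y1 by apply: kimg_stab; rewrite qY1 bY1.
  have -> : kimg (tperm q b) Y0 = Y'.
    apply: val_inj; apply/setP => z; rewrite /= !mem_tp_imset.
    case: (eqVneq z q) => [->|zq]; first by rewrite tpermL tpermL (negbTE bY0) (negbTE aY1).
    case: (eqVneq z a) => [->|za].
      by rewrite tpermR tpermD // ?aY0 ?qY1 // eq_sym.
    case: (eqVneq z b) => [->|zb].
      by rewrite tpermR tpermD // ?qY0 ?bY1 // 1?eq_sym.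
    rewrite !tpermD // 1?eq_sym //.
    apply/idP/idP => H.
      by apply/negPn/negP => H'; move/eqP: za; apply; apply: onlyA.
    by apply/negPn/negP => H'; move/eqP: zb; apply; apply: onlyB.
  have [s [Hs ns _]] := pick3 q q cI3.
  move: Hs; rewrite inE => /andP[sY0 sY1].
  have nbs : b != s by apply: contraNneq bY0 => ->.
  have sY' : s \in val Y' by apply: IY'.
  apply: (two_partners G Hk3); right; exists a, b, s; split => //.
    by exists d.
  have := tp_rel G (x:=b) (y:=s) (Y0:=Y') (Y1:=Y1) (ex_intro _ d (conj Cd (conj da db)))
            ltac:(by rewrite bY' sY') ltac:(by rewrite bY1 sY1).
  rewrite tpermL tpermD //.
    by rewrite eq_sym.
  by apply: contraNneq aY1 => <-.
apply: (transfer G (x:=q) (y:=a)).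
have -> : kimg (tperm q a) Y0 = Y0 by apply: kimg_stab; rewrite qY0 aY0.
have HdY' : d Y' \in val Y' by apply: HC.
have [s [Hs ns1 ns2]] := pick3 q (d Y') cI3.
move: Hs; rewrite inE => /andP[sY0 sY1].
have sY' : s \in val Y' by apply: IY'.
have nas : a != s by apply: contraNneq aY1 => ->.
apply: (two_partners G Hk3); left; exists a, s, (d Y'); split => //.
  by exists d.
have := tp_rel G (x:=a) (y:=s) (Y0:=Y0) (Y1:=Y') (ex_intro _ d (conj Cd (conj Hd erefl)))
          ltac:(by rewrite aY0 sY0) ltac:(by rewrite aY' sY').
by rewrite tpermL tpermD // eq_sym.
Qed.

Lemma Plemma (X : finType) k (C : kfun X k -> Prop) : Good C -> 4 <= k ->
  forall c, C c -> forall (L : seq (ksub X k)) Y0, Y0 \notin L ->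
  forall z, z \in val Y0 -> z != c Y0 ->
  exists e, C e /\ e Y0 = z /\ forall Y, Y \in L -> e Y = c Y.
Proof.
move=> G Hk c Cc; have [HC HS Hop _] := G.
elim=> [|Y1 L IH] Y0 HL z Hz nz.
  by have [d [Cd Hd]] := Tg G Hz; exists d.
move: HL; rewrite inE negb_or => /andP[n01 HL].
have [z' [Hz' nz'1 nz'2]] := pick3 (c Y0) z (ltac:(by rewrite cardY; lia) : 3 <= #|val Y0|).
have [ez [Cez [ez0 ezL]]] := IH Y0 HL z Hz nz.
have [e' [Ce' [e'0 e'1]]] := FULL2_main G Hk n01 Hz' (HC c Cc Y1).
have [e [Ce [E0 E1]]] := Hop c ez e' Cc Cez Ce' Y0
   ltac:(by rewrite ez0 eq_sym) ltac:(by rewrite e'0 eq_sym)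
   ltac:(by rewrite ez0 e'0 eq_sym).
exists e; split => //; split; first by rewrite E0.
move=> Y; rewrite inE => /orP[/eqP->|HY].
  by rewrite E1 // e'1 eqxx orbT.
by rewrite E1 // ezL // eqxx.
Qed.

Lemma final (X : finType) k (C : kfun X k -> Prop) : Good C -> 4 <= k ->
  forall g, is_choice g -> C g.
Proof.
move=> G Hk g Hg; have [HC HS Hop [c0 H0]] := G.
suff [e [Ce He]] : exists e, C e /\ forall Y, Y \in enum [set: ksub X k] -> e Y = g Y.
  suff -> : g = e by [].
  by apply/ffunP => Y; rewrite He // mem_enum inE.
elim: (enum _) => [|Y0 L [e [Ce He]]]; first by exists c0.
case: (boolP (Y0 \in L)) => [inL|ninL].
  by exists e; split => // Y; rewrite inE => /orP[/eqP->|]; apply: He.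
case: (eqVneq (g Y0) (e Y0)) => [Eq|nE].
  by exists e; split => // Y; rewrite inE => /orP[/eqP->|]; [rewrite Eq | apply: He].
have [e' [Ce' [e'0 e'L]]] := Plemma G Hk Ce ninL (Hg Y0) nE.
exists e'; split => // Y; rewrite inE => /orP[/eqP->|HY] //.
by rewrite e'L // He.
Qed.

Theorem lemma12p1 (X : finType) (r k : nat)
  (F : forall n, op X n -> Prop) (C : kfun X k -> Prop) :
  3 <= r -> r <= k -> 5 <= k -> maxn 7 r <= #|X| - k ->
  is_clone F ->
  ((exists f : op X r, F r f /\ is_f_r12 f) \/
   (forall a : r.-tuple X, uniq a ->
      exists f : op X r, F r f /\
        forall i1 i2 : 'I_r, val i1 = 0 -> val i2 = 1 ->
          f a = tnth a i2 /\
          (forall b : r.-tuple X, ~~ uniq b -> f b = tnth b i1))) ->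
  (forall c, C c -> is_choice c) ->
  (exists c, C c) ->
  symmetric_fam C ->
  (forall n (f : op X n), F n f -> closed_under C f) ->
  forall c : kfun X k, is_choice c -> C c.
Proof.
move=> Hr Hrk Hk _ _ Hdisj HC [c0 H0] HS HCl.
have G : Good C.
  split => //; last by exists c0.
  exact: (Op3_of Hr Hrk (weak_of Hdisj) HCl HC HS H0).
by apply: final G _; lia.
Qed.
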